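(* Consider conditional probability table (CPT) Bayesian networks on $m$ nodes as described in the context, for an ensemble $\mathcal{G}$ of DAGs on $[m]$ and parameter maps $\mathcal{P}(\mathcal{G})$, and suppose $\theta_{\min}>0$. Then $$\Delta_{\max}:=\max_{i\in[m]}\max_{G\in\mathcal{G}}\sup_{\Theta\in\mathcal{P}(\mathcal{G})}\mathbb{E}_{X_{\pi_i(G)}}[\Delta(\eta_i,\eta_0)]\le 4\log(1/\theta_{\min}),\qquad \sup_{\Theta\in\mathcal{P}(\mathcal{G})}I(S;G\mid\Theta)\le 4nm\log(1/\theta_{\min}).$$
   Context: Each $X_i$ takes values in $[v]$. Given a DAG $G$ and parameter map $\Theta$, node $i$ has a conditional probability table $\Theta_i^G:[v]^{|\pi_i(G)|}\to\Delta_v$ (the probability simplex), and $P(X_i=j\mid X_{\pi_i(G)}=x)=\theta^G_{ij}(x)$; the reference distribution $P_i(\varnothing,\Theta)$ is the table the parameter map assigns to node $i$ when it has no parents. The joint distribution is $\prod_iP_i(x_i\mid x_{\pi_i(G)})$; $S$ is $n$ i.i.d. samples from it; $I(S;G\mid\Theta)$ is the mutual information between $S$ and $G$ with $G$ uniform on $\mathcal{G}$ and $\Theta$ fixed. Viewing the categorical distribution as an exponential family with sufficient statistic $T(x)=(\mathbf{1}[x=j])_{j=1}^v$ and natural parameter $(\log\theta_j)_{j=1}^v$, $\eta_i=(\log\theta^G_{ij}(X_{\pi_i(G)}))_j$ and $\eta_0$ is the natural parameter of $P_i(\varnothing,\Theta)$; $\Delta(\eta_1,\eta_2)=(\eta_1-\eta_2)^T(\tau(\eta_1)-\tau(\eta_2))$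 where $\tau$ is the expected sufficient statistic (the probability vector). $\mathbb{E}_{X_{\pi_i(G)}}$ is expectation over the parents' values under the network's distribution. $\theta_{\min}:=\inf_{\Theta}\min_{G}\min_{i}\min_{x}\min_{j}\theta^G_{ij}(x)$, the minimum probability entry over all tables used, including the parentless tables $P_i(\varnothing,\Theta)$. *)

(* Defs.v *)
From HB Require Import structures.
From mathcomp Require Import all_boot all_order all_algebra.
From mathcomp Require Import all_classical all_reals all_analysis.
Set Implicit Arguments. Unset Strict Implicit. Unset Printing Implicit Defensive.
Import Order.TTheory GRing.Theory Num.Theory.
Local Open Scope ring_scope.
Local Open Scope classical_set_scope.

Definition cfg (m v : nat) := {ffun 'I_m -> 'I_v}.

(* A directed graph on [m], given by its parent sets: j \in G i iff j -> i. *)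
Definition graph (m : nat) := {ffun 'I_m -> {set 'I_m}}.

Definition is_dag (m : nat) (G : graph m) : Prop :=
  forall i j : 'I_m, j \in G i -> ~~ connect (fun a b => a \in G b) i j.

(* A parameter map: for node i and parent set pi, the CPT
   x |-> (P(X_i = k | X_pi = x_pi))_k ; it is stored as a function of the
   whole configuration x, required (in is_param) to depend on x only through
   x restricted to pi. The reference table P_i(emptyset, Theta) is Theta i set0. *)
Definition param (R : realType) (m v : nat) :=
  'I_m -> {set 'I_m} -> cfg m v -> 'I_v -> R.

Definition is_param (R : realType) (m v : nat) (Th : param R m v) : Prop :=
  forall (i : 'I_m) (pi : {set 'I_m}),
    (forall x y : cfg m v, (forall j, j \in pi -> x j = y j) ->
        forall k, Th i pi x k = Th i pi y k)
    /\ (forall x k, 0 <= Th i pi x k)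
    /\ (forall x, \sum_(k < v) Th i pi x k = 1).

Definition theta_min (R : realType) (m v : nat) (Gs : {set graph m})
  (PP : param R m v -> Prop) : R :=
  inf [set t : R | exists Th, PP Th /\ exists G, G \in Gs /\
         exists i x k, t = Th i (G i) x k \/ t = Th i finset.set0 x k].

Definition joint (R : realType) (m v : nat) (G : graph m) (Th : param R m v)
  (x : cfg m v) : R := \prod_(i < m) Th i (G i) x (x i).

(* Delta(eta1, eta2) = (eta1 - eta2)^T (tau(eta1) - tau(eta2)) for the
   categorical family, eta = (log p_j)_j, tau(eta) = p. *)
Definition Delta (R : realType) (v : nat) (p q : 'I_v -> R) : R :=
  \sum_(k < v) (ln (p k) - ln (q k)) * (p k - q k).

Definition EDelta (R : realType) (m v : nat) (G : graph m) (Th : param R m v)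
  (i : 'I_m) : R :=
  \sum_(x : cfg m v) joint G Th x * Delta (Th i (G i) x) (Th i finset.set0 x).

Definition sample_lik (R : realType) (m v n : nat) (G : graph m)
  (Th : param R m v) (S : {ffun 'I_n -> cfg m v}) : R :=
  \prod_(k < n) joint G Th (S k).

Definition sample_marg (R : realType) (m v n : nat) (Gs : {set graph m})
  (Th : param R m v) (S : {ffun 'I_n -> cfg m v}) : R :=
  (#|Gs|%:R)^-1 * \sum_(G in Gs) sample_lik G Th S.

(* I(S;G | Theta) with G uniform on Gs (natural log; 0 log 0 = 0 since ln 0 = 0). *)
Definition mutual_info (R : realType) (m v n : nat) (Gs : {set graph m})
  (Th : param R m v) : R :=
  \sum_(G in Gs) (#|Gs|%:R)^-1 *
    \sum_(S : {ffun 'I_n -> cfg m v})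
      sample_lik G Th S * ln (sample_lik G Th S / sample_marg Gs Th S).

(* Main.v *)
Require Import Defs.
From HB Require Import structures.
From mathcomp Require Import all_boot all_order all_algebra.
From mathcomp Require Import all_classical all_reals all_analysis.
From mathcomp Require Import lra ring.
Import Order.TTheory GRing.Theory Num.Theory.
Set Implicit Arguments. Unset Strict Implicit. Unset Printing Implicit Defensive.
Local Open Scope ring_scope.

Definition upd m v (x : cfg m v) (s : 'I_m) (k : 'I_v) : cfg m v :=
  [ffun j => if j == s then k else x j].

Lemma updE m v (x : cfg m v) s k j : upd x s k j = if j == s then k else x j.
Proof. by rewrite ffunE. Qed.

Lemma sum_upd (R : realType) m v (F : cfg m v -> R) s (k0 : 'I_v) :
  \sum_(x : cfg m v) F x = \sum_(x : cfg m v | x s == k0) \sum_(k < v) F (upd x s k).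
Proof.
rewrite (partition_big (fun x : cfg m v => x s) xpredT) //=.
rewrite [RHS]exchange_big /=.
apply: eq_bigr => k _.
rewrite (reindex_onto (fun x : cfg m v => upd x s k) (fun y : cfg m v => upd y s k0)).
  apply: eq_bigl => x; rewrite /= updE eqxx eqxx /=.
  apply/eqP/eqP => [<-|xs]; first by rewrite updE eqxx.
  by apply/ffunP => j; rewrite !updE; case: eqP => // ->.
move=> y /eqP ys; apply/ffunP => j; rewrite !updE.
by case: eqP => // ->.
Qed.

Lemma sink_exists m (G : graph m) (A : {set 'I_m}) (s0 : 'I_m) :
  is_dag G -> s0 \in A -> exists2 s, s \in A & forall j, j \in A -> s \notin G j.
Proof.
move=> dag s0A.
pose e : rel 'I_m := fun a b => a \in G b.
pose anc i := #|[set a | connect e a i]|.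
case: (arg_maxnP anc s0A) => s sA smax.
exists s => // j jA; apply/negP => sGj.
have := smax j jA; rewrite /= leqNgt => /negP; apply.
apply: proper_card; apply/properP; split.
  apply/fintype.subsetP => a; rewrite !inE => cas.
  by apply: (connect_trans cas); apply: connect1.
exists j; first by rewrite inE connect0.
by rewrite inE; apply: (dag j s sGj).
Qed.

Lemma not_self m (G : graph m) i : is_dag G -> i \notin G i.
Proof. by move=> dag; apply/negP => /dag; rewrite connect0. Qed.

Lemma sum_prod_main (R : realType) m v (G : graph m) (Th : param R m v) (k0 : 'I_v) :
  is_dag G -> is_param Th -> forall A : {set 'I_m},
  (\sum_(x : cfg m v) \prod_(i in A) Th i (G i) x (x i)) * (v%:R ^+ #|A|)
  = (#|{: cfg m v}|)%:R.
Proof.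
move=> dag hp.
suff H : forall N (A : {set 'I_m}), #|A| = N ->
  (\sum_(x : cfg m v) \prod_(i in A) Th i (G i) x (x i)) * (v%:R ^+ #|A|)
  = (#|{: cfg m v}|)%:R by move=> A; exact: H.
elim=> [|N IH] A cA.
  have -> : A = finset.set0 by apply/eqP; rewrite -cards_eq0 cA.
  rewrite cards0 expr0 mulr1.
  under eq_bigr do rewrite big_set0.
  by rewrite sumr_const.
have [s0 s0A] : exists s0, s0 \in A.
  by apply/set0Pn; rewrite -card_gt0 cA.
have [s sA sink] := sink_exists dag s0A.
have cAs : #|A :\ s| = N by move: cA; rewrite (cardsD1 s) sA => -[].
have ginv x k : \prod_(i in A :\ s) Th i (G i) (upd x s k) (upd x s k i) = \prod_(i in A :\ s) Th i (G i) x (x i).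
  apply: eq_bigr => i; rewrite !inE => /andP [nis iA].
  rewrite updE (negbTE nis).
  have [h _] := hp i (G i); apply: h => j jG.
  rewrite updE; case: eqP => // js; subst j.
  by move: (sink i iA); rewrite jG.
have finv x k : Th s (G s) (upd x s k) (upd x s k s) = Th s (G s) x k.
  rewrite updE eqxx.
  have [h _] := hp s (G s); apply: h => j jG.
  rewrite updE; case: eqP => // js; subst j.
  by move: (not_self s dag); rewrite jG.
have key : (\sum_(x : cfg m v) \prod_(i in A) Th i (G i) x (x i)) * v%:R
           = \sum_(x : cfg m v) \prod_(i in A :\ s) Th i (G i) x (x i).
  under eq_bigr do rewrite (big_setD1 s sA) /=.
  rewrite (sum_upd _ s k0) [RHS](sum_upd _ s k0) mulr_suml.
  apply: eq_bigr => x _.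
  under eq_bigr do rewrite finv ginv.
  under [RHS]eq_bigr do rewrite ginv.
  rewrite -mulr_suml sumr_const card_ord.
  have [_ [_ h1]] := hp s (G s).
  by rewrite h1 mul1r mulr_natr.
rewrite cA exprS mulrA key.
by have := IH _ cAs; rewrite cAs.
Qed.

Lemma sum_joint (R : realType) m v (G : graph m) (Th : param R m v) (k0 : 'I_v) :
  is_dag G -> is_param Th -> \sum_(x : cfg m v) joint G Th x = 1.
Proof.
move=> dag hp.
have := sum_prod_main k0 dag hp [set: 'I_m].
rewrite cardsT card_ord card_ffun !card_ord natrX.
have e (x : cfg m v) : \prod_(i in [set: 'I_m]) Th i (G i) x (x i) = joint G Th x.
  by apply: eq_bigl => i; rewrite finset.in_setT.
under eq_bigr do rewrite e.
have vm : (v%:R : R) ^+ m != 0.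
  by rewrite expf_neq0 // pnatr_eq0 -lt0n (leq_ltn_trans _ (ltn_ord k0)).
move/(congr1 (fun z => z / v%:R ^+ m)); rewrite mulfK // divff //.
Qed.

Lemma entry_le1 (R : realType) m v (Th : param R m v) i pi x k :
  is_param Th -> Th i pi x k <= 1.
Proof.
move=> hp; have [_ [h0 h1]] := hp i pi.
by rewrite -(h1 x) (bigD1 k) //= lerDl sumr_ge0.
Qed.

Lemma delta_term (R : realType) (t p q : R) :
  0 < t -> t <= p -> p <= 1 -> t <= q -> q <= 1 ->
  (ln p - ln q) * (p - q) <= ln t^-1 * (p + q).
Proof.
move=> t0 tp p1 tq q1.
have p0 : 0 < p by apply: lt_le_trans tp.
have q0 : 0 < q by apply: lt_le_trans tq.
have lp : ln t <= ln p by rewrite ler_ln ?posrE.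
have lq : ln t <= ln q by rewrite ler_ln ?posrE.
have lp0 : ln p <= 0 by apply: ln_le0.
have lq0 : ln q <= 0 by apply: ln_le0.
rewrite lnV ?posrE //.
have [pq|qp] := lerP p q.
  have : ln p <= ln q by rewrite ler_ln ?posrE.
  move=> hl.
  have h1 : 0 <= (ln q - ln t) * (q - p) by apply: mulr_ge0; lra.
  have h2 : 0 <= (- ln t) * (2 * p) by apply: mulr_ge0; lra.
  nra.
have : ln q <= ln p by rewrite ler_ln ?posrE // ltW.
move=> hl.
have h1 : 0 <= (ln p - ln t) * (p - q) by apply: mulr_ge0; lra.
have h2 : 0 <= (- ln t) * (2 * q) by apply: mulr_ge0; lra.
nra.
Qed.

Theorem lemma7 (R : realType) (m v n : nat) (Gs : {set graph m})
  (PP : param R m v -> Prop) :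
  Gs != finset.set0 ->
  (forall G, G \in Gs -> is_dag G) ->
  (forall Th, PP Th -> is_param Th) ->
  0 < theta_min Gs PP ->
  (forall (i : 'I_m) (G : graph m) (Th : param R m v), G \in Gs -> PP Th ->
     EDelta G Th i <= 4 * ln ((theta_min Gs PP)^-1))
  /\
  (forall Th : param R m v, PP Th ->
     mutual_info n Gs Th <= 4 * n%:R * m%:R * ln ((theta_min Gs PP)^-1)).
Proof.
move=> Gs0 dags hps tpos.
pose E := [set t : R | exists Th, PP Th /\ exists G, G \in Gs /\
         exists i x k, t = Th i (G i) x k \/ t = Th i finset.set0 x k]%classic.
have tE : theta_min Gs PP = inf E by [].
move: tpos; rewrite tE; set t := inf E => tpos.
have hlE : has_lbound E.
  exists 0 => y [Th [PTh [G [GG [i [x [k [->|->]]]]]]]];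
    [have [_ [h0 _]] := hps Th PTh i (G i) | have [_ [h0 _]] := hps Th PTh i finset.set0];
    apply: h0.
have lbE : forall Th, PP Th -> forall G, G \in Gs -> forall i x k,
    t <= Th i (G i) x k /\ t <= Th i finset.set0 x k.
  move=> Th PTh G GG i x k; split; apply: (ge_inf hlE);
    exists Th; split => //; exists G; split => //; exists i, x, k; by [left|right].
have [y Ey] : (E !=set0)%classic.
  apply/set0P/negP => /eqP E0.
  by move: tpos; rewrite /t E0 inf0 ltxx.
have [v0 t1] : (0 < v)%N /\ t <= 1.
  have ty : t <= y by apply: (ge_inf hlE).
  move: Ey => [Th [PTh [G [GG [i [x [k Hy]]]]]]].
  split; first exact: (leq_ltn_trans (leq0n _) (ltn_ord k)).
  apply: le_trans ty _.
  by case: Hy => ->; apply: entry_le1; apply: hps.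
pose k0 : 'I_v := Ordinal v0.
have L0 : 0 <= ln t^-1 by apply: ln_ge0; rewrite invf_ge1.
have lnt0 : ln t <= 0 by apply: ln_le0.
have lnV' : ln t^-1 = - ln t by rewrite lnV ?posrE.
split.
  move=> i G Th GG PTh.
  have hp := hps Th PTh.
  rewrite /EDelta.
  apply: (@le_trans _ _ (\sum_(x : cfg m v) joint G Th x * (ln t^-1 * 2))).
    apply: ler_sum => x _; apply: ler_wpM2l.
      by apply: prodr_ge0 => j _; have [_ [h0 _]] := hp j (G j); apply: h0.
    rewrite /Delta.
    apply: (@le_trans _ _ (\sum_(k < v) ln t^-1 * (Th i (G i) x k + Th i finset.set0 x k))).
      apply: ler_sum => k _; have [a b] := lbE Th PTh G GG i x k.
      by apply: delta_term => //; apply: entry_le1.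
    rewrite -mulr_sumr big_split /=.
    have [_ [_ h1]] := hp i (G i); have [_ [_ h2]] := hp i finset.set0.
    by rewrite h1 h2.
  rewrite -mulr_suml (sum_joint k0 (dags G GG) hp).
  lra.
move=> Th PTh.
have hp := hps Th PTh.
pose B := (t ^+ m) ^+ n.
have B0 : 0 < B by rewrite exprn_gt0 // exprn_gt0.
have jb G x : G \in Gs -> t ^+ m <= joint G Th x <= 1.
  move=> GG; rewrite /joint; apply/andP; split.
    rewrite (_ : t ^+ m = \prod_(i < m) t); last by rewrite prodr_const card_ord.
    apply: ler_prod => i _; rewrite ltW //=.
    by have [a _] := lbE Th PTh G GG i x (x i).
  apply: (@le_trans _ _ (\prod_(i < m) (1 : R))); last by rewrite big1.
  apply: ler_prod => i _; rewrite entry_le1 // andbT.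
  by apply: le_trans (ltW tpos) _; have [a _] := lbE Th PTh G GG i x (x i).
have lb G (S : {ffun 'I_n -> cfg m v}) : G \in Gs -> B <= sample_lik G Th S <= 1.
  move=> GG; rewrite /sample_lik; apply/andP; split.
    rewrite (_ : B = \prod_(k < n) t ^+ m); last by rewrite prodr_const card_ord.
    apply: ler_prod => k _; have /andP [a _] := jb G (S k) GG.
    by rewrite a andbT exprn_ge0 // ltW.
  apply: (@le_trans _ _ (\prod_(k < n) (1 : R))); last by rewrite big1.
  apply: ler_prod => k _; have /andP [a b] := jb G (S k) GG.
  by rewrite b andbT (le_trans _ a) // exprn_ge0 // ltW.
have N0 : 0 < (#|Gs|%:R : R) by rewrite ltr0n card_gt0.
have mb (S : {ffun 'I_n -> cfg m v}) : B <= sample_marg Gs Th S <= 1.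
  rewrite /sample_marg; apply/andP; split.
    rewrite -{1}(mulKf (lt0r_neq0 N0) B); apply: ler_wpM2l; first by rewrite invr_ge0 ltW.
    rewrite mulr_natl -sumr_const; apply: ler_sum => G GG.
    by case/andP: (lb G S GG).
  rewrite -[X in _ <= X](mulVf (lt0r_neq0 N0)); apply: ler_wpM2l; first by rewrite invr_ge0 ltW.
  rewrite -[X in _ <= X]sumr_const; apply: ler_sum => G GG.
  by case/andP: (lb G S GG).
pose K := - ((ln t *+ m) *+ n).
have lnb G (S : {ffun 'I_n -> cfg m v}) : G \in Gs ->
    ln (sample_lik G Th S / sample_marg Gs Th S) <= K.
  move=> GG; have /andP [l1 l2] := lb G S GG; have /andP [m1 m2] := mb S.
  have mp : 0 < sample_marg Gs Th S by apply: lt_le_trans m1.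
  have lp : 0 < sample_lik G Th S by apply: lt_le_trans l1.
  have : sample_lik G Th S / sample_marg Gs Th S <= B^-1.
    apply: (@le_trans _ _ (1 / sample_marg Gs Th S)).
      by rewrite ler_wpM2r // invr_ge0 ltW.
    by rewrite div1r lef_pV2 ?posrE.
  rewrite -ler_ln ?posrE ?divr_gt0 ?invr_gt0 // => h.
  apply: le_trans h _.
  by rewrite lnV ?posrE // /B lnXn ?exprn_gt0 // lnXn.
have sl G : G \in Gs -> \sum_(S : {ffun 'I_n -> cfg m v}) sample_lik G Th S = 1.
  move=> GG.
  rewrite (_ : \sum_(S : {ffun 'I_n -> cfg m v}) sample_lik G Th S =
     \prod_(k < n) \sum_(x : cfg m v) joint G Th x); last first.
    by rewrite bigA_distr_bigA.
  by rewrite (sum_joint k0 (dags G GG) hp) big1.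
rewrite /mutual_info.
apply: (@le_trans _ _ (\sum_(G in Gs) (#|Gs|%:R)^-1 * K)).
  apply: ler_sum => G GG; apply: ler_wpM2l; first by rewrite invr_ge0 ltW.
  apply: (@le_trans _ _ (\sum_(S : {ffun 'I_n -> cfg m v}) sample_lik G Th S * K)).
    apply: ler_sum => S _; apply: ler_wpM2l; last exact: lnb.
    by have /andP [a _] := lb G S GG; apply: le_trans a; apply: ltW.
  by rewrite -mulr_suml (sl G GG) mul1r.
rewrite sumr_const -[_ *+ _]mulr_natl mulrA mulfV ?lt0r_neq0 // mul1r.
have e : K = n%:R * (m%:R * ln t^-1).
  by rewrite /K lnV' -(mulr_natr (ln t) m) -(mulr_natr (ln t * m%:R) n); ring.
have h : 0 <= n%:R * (m%:R * ln t^-1) by rewrite !mulr_ge0.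
rewrite e -!mulrA.
lra.
Qed.
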